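(* Let $A=aH-\sum_{i=1}^{10}b_iE_i\in H_2(\mathbb{CP}^2\#10\overline{\mathbb{CP}^2};\mathbb Z)$ be a reduced class with $A\cdot A=-4$, $K_{st}\cdot A=2$ and $b_{10}=2$. Then $A=-a'(-3H+\sum_{i=1}^9E_i)-2E_{10}$ for some integer $a'\ge2$.
   Context: $\{H,E_1,\dots,E_{10}\}$ is the standard basis ($H^2=1$, $E_i^2=-1$, pairwise orthogonal), $K_{st}=-3H+\sum_{i=1}^{10}E_i$. A class $aH-\sum b_iE_i$ is reduced if $b_1\ge\cdots\ge b_{10}\ge0$ and $a\ge b_1+b_2+b_3$. *)

(* Defs.v *)
(* H_2(CP^2 # 10 (-CP^2); Z) = Z^11 with basis H, E_1..E_10.
   A class is (coefficient of H, coefficients of E_1..E_10), E_{i+1} <-> index i : 'I_10. *)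
From HB Require Import structures.
From mathcomp Require Import all_boot all_order all_algebra.
Set Implicit Arguments. Unset Strict Implicit. Unset Printing Implicit Defensive.
Import Order.TTheory GRing.Theory Num.Theory.
Local Open Scope ring_scope.

Definition cls := (int * {ffun 'I_10 -> int})%type.

Definition mkcls (a : int) (b : 'I_10 -> int) : cls := (a, [ffun i => - b i]).

Definition clsH : cls := (1, [ffun => 0]).
Definition clsE (j : 'I_10) : cls := (0, [ffun i => if i == j then 1 else 0]).

Definition cls_add (x y : cls) : cls := (x.1 + y.1, [ffun i => x.2 i + y.2 i]).
Definition cls_scale (k : int) (x : cls) : cls := (k * x.1, [ffun i => k * x.2 i]).

Definition dot (x y : cls) : int := x.1 * y.1 - \sum_(i < 10) x.2 i * y.2 i.

Definition Kst : cls := (-3, [ffun => 1]).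

Definition reduced (a : int) (b : 'I_10 -> int) : Prop :=
  (forall i j : 'I_10, (i <= j)%N -> b j <= b i) /\
  0 <= b (@ord_max 9) /\
  b (@ord0 9) + b (inord 1) + b (inord 2) <= a.

Definition K9 : cls := (-3, [ffun i : 'I_10 => if (i < 9)%N then 1 else 0]).

(* Main.v *)
Require Import Defs.
From HB Require Import structures.
From mathcomp Require Import all_boot all_order all_algebra.
From mathcomp Require Import zify ring.
Import Order.TTheory GRing.Theory Num.Theory.
Local Open Scope ring_scope.

Lemma sum10 (F : nat -> int) : \sum_(i < 10) F i =
  F 0%N + F 1%N + F 2%N + F 3%N + F 4%N + F 5%N + F 6%N + F 7%N + F 8%N + F 9%N.
Proof. by rewrite !big_ord_recr big_ord0 /= add0r. Qed.

Lemma sum9 (x0 x1 x2 x3 x4 x5 x6 x7 x8 : int) :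
  0 <= x0 -> 0 <= x1 -> 0 <= x2 -> 0 <= x3 -> 0 <= x4 -> 0 <= x5 -> 0 <= x6 -> 0 <= x7 -> 0 <= x8 ->
  x0 + x1 + x2 + x3 + x4 + x5 + x6 + x7 + x8 = 0 ->
  x0 = 0 /\ x1 = 0 /\ x2 = 0 /\ x3 = 0 /\ x4 = 0 /\ x5 = 0 /\ x6 = 0 /\ x7 = 0 /\ x8 = 0.
Proof. move=> *; lia. Qed.

Theorem lemma5p7 (a : int) (b : 'I_10 -> int) :
  reduced a b ->
  dot (mkcls a b) (mkcls a b) = -4 ->
  dot Kst (mkcls a b) = 2 ->
  b (@ord_max 9) = 2 ->
  exists a' : int, 2 <= a' /\
    mkcls a b = cls_add (cls_scale (- a') K9) (cls_scale (-2) (clsE (@ord_max 9))).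
Proof.
move=> [Hdec [H0 H3]] Hsq HK Hb9.
pose c k := b (inord k).
have bc : forall i : 'I_10, b i = c i by move=> i; rewrite /c inord_val.
rewrite /dot /mkcls /Kst /= in Hsq HK.
have E1 : \sum_(i < 10) [ffun i => - b i] i * [ffun i => - b i] i
   = \sum_(i < 10) (c i * c i).
  by apply: eq_bigr => i _; rewrite !ffunE bc mulrNN.
have E2 : \sum_(i < 10) [ffun=> (1:int)] i * [ffun i => - b i] i
   = \sum_(i < 10) (- c i).
  by apply: eq_bigr => i _; rewrite !ffunE bc mul1r.
rewrite E1 (sum10 (fun k => c k * c k)) in Hsq; rewrite E2 (sum10 (fun k => - c k)) in HK.
have c9 : c 9%N = 2 by rewrite -Hb9 (bc ord_max).
have cm : forall k j, (k <= j < 10)%N -> c j <= c k.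
  move=> k j /andP[kj j10]; have k10 : (k < 10)%N by apply: leq_ltn_trans j10.
  have := Hdec (Ordinal k10) (Ordinal j10) kj.
  by rewrite !bc.
have H3' : c 0%N + c 1%N + c 2%N <= a by rewrite (bc ord0) (bc (inord 1)) (bc (inord 2)) in H3; rewrite !inordK in H3.
set S := c 0%N + c 1%N + c 2%N + c 3%N + c 4%N + c 5%N + c 6%N + c 7%N + c 8%N.
set Q := c 0%N * c 0%N + c 1%N * c 1%N + c 2%N * c 2%N + c 3%N * c 3%N + c 4%N * c 4%N + c 5%N * c 5%N + c 6%N * c 6%N + c 7%N * c 7%N + c 8%N * c 8%N.
have HS : S = 3 * a.
  rewrite c9 in HK. rewrite /S. lia.
have HQ : Q = a * a.
  rewrite c9 in Hsq. rewrite /Q. lia.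
have Z : (a - 3 * c 0%N)^+2 + (a - 3 * c 1%N)^+2 + (a - 3 * c 2%N)^+2 + (a - 3 * c 3%N)^+2
   + (a - 3 * c 4%N)^+2 + (a - 3 * c 5%N)^+2 + (a - 3 * c 6%N)^+2 + (a - 3 * c 7%N)^+2
   + (a - 3 * c 8%N)^+2 = 0.
  have -> : (a - 3 * c 0%N)^+2 + (a - 3 * c 1%N)^+2 + (a - 3 * c 2%N)^+2 + (a - 3 * c 3%N)^+2
   + (a - 3 * c 4%N)^+2 + (a - 3 * c 5%N)^+2 + (a - 3 * c 6%N)^+2 + (a - 3 * c 7%N)^+2
   + (a - 3 * c 8%N)^+2 = 9 * (Q - a * a) - 6 * a * (S - 3 * a) by rewrite /Q /S; ring.
  by rewrite HQ HS !subrr !mulr0 subr0.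
clear Hsq HK E1 E2 HS HQ H3 H3' Hdec H0.
have sq0 : forall x : int, x ^+ 2 = 0 -> x = 0 by move=> x /eqP; rewrite sqrf_eq0 => /eqP.
have G := sqr_ge0 (a - 3 * c 0%N); have G1 := sqr_ge0 (a - 3 * c 1%N);
have G2 := sqr_ge0 (a - 3 * c 2%N); have G3 := sqr_ge0 (a - 3 * c 3%N);
have G4 := sqr_ge0 (a - 3 * c 4%N); have G5 := sqr_ge0 (a - 3 * c 5%N);
have G6 := sqr_ge0 (a - 3 * c 6%N); have G7 := sqr_ge0 (a - 3 * c 7%N);
have G8 := sqr_ge0 (a - 3 * c 8%N).
have [e0 [e1 [e2 [e3 [e4 [e5 [e6 [e7 e8]]]]]]]] := sum9 _ _ _ _ _ _ _ _ _ G G1 G2 G3 G4 G5 G6 G7 G8 Z.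
move: e0 e1 e2 e3 e4 e5 e6 e7 e8 => /sq0 e0 /sq0 e1 /sq0 e2 /sq0 e3 /sq0 e4 /sq0 e5 /sq0 e6 /sq0 e7 /sq0 e8.
clear Z G G1 G2 G3 G4 G5 G6 G7 G8 sq0 S Q.
have ge2 : 2 <= c 0%N by rewrite -c9; apply: cm.
exists (c 0%N); split => //.
rewrite /mkcls /cls_add /cls_scale /K9 /clsE /=.
congr pair; first by lia.
apply/ffunP => i; rewrite !ffunE bc.
case: i => [[|[|[|[|[|[|[|[|[|[|k]]]]]]]]]] Hi] //=; lia.
Qed.
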